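(* Let $f$ be a function, $x^\star$ one of its global optima with associated $(\nu,\rho)$, let $C>1$, and let $d=d(\nu,C,\rho)>0$. Set \[ \tilde n=\Big\lfloor \frac{n}{\bar\log n}\Big\rfloor\,\frac{d\log(1/\rho)}{C}, \] and assume $\tilde n>e$. Then after a run of \texttt{SequOOL} with budget $n$ (deterministic feedback), the simple regret satisfies \[ r_n\le \nu\Big(\frac{\tilde n}{\log \tilde n}\Big)^{-1/d}. \]
   Context: Let $\mathcal X$ be a set and $f:\mathcal X\to\mathbb R$ a function attaining its supremum; a point $x^\star$ with $f(x^\star)=\sup_{x\in\mathcal X}f(x)$ is a global optimum. Hierarchical partitioning $\mathcal P=\{\mathcal P_{h,i}\}$: - for every depth $h\ge 0$, the cells $\{\mathcal P_{h,i}\}_{1\le i\le I_h}$ form a partition of $\mathcal X$, and $\mathcal P_{0,1}=\mathcal X$; - each cell $\mathcal P_{h,i}$ is partitioned into finitely many children cells of depth $h+1$; - each cell has a fixed representative point $x_{h,i}\in\mathcal P_{h,i}$, and we write $f_{h,i}=f(x_{h,i})$; - for a global optimum $x^\star$, $i^\star_h$ is the index of the unique depth-$h$ cell containing $x^\star$. Local smoothness: a global optimum $x^\star$ has associated $(\nu,\rho)$, with $\nu>0$ and $\rho\in(0,1)$, if for all $h\in\mathbb N$ and all $x\in\mathcal P_{h,i^\star_h}$ we have $f(x)\ge f(x^\star)-\nu\rho^h$. Near-optimality dimension: for $\nu>0$, $C>1$, $\rho\in(0,1)$, let $\mathcal N_h(\epsilon)$ be the number of depth-$h$ cells $\mathcal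 P_{h,i}$ with $\sup_{x\in\mathcal P_{h,i}}f(x)\ge f(x^\star)-\epsilon$. Define \[ d(\nu,C,\rho)=\inf\{d'\ge 0:\ \forall h\ge 0,\ \mathcal N_h(3\nu\rho^h)\le C\rho^{-d'h}\}, \] which is assumed finite. Notation: $\bar\log n=\sum_{t=1}^n 1/t$ (the $n$-th harmonic number). Simple regret: $r_n=f(x^\star)-f(x(n))$. Deterministic feedback: evaluating a cell $\mathcal P_{h,i}$ returns $f_{h,i}$ exactly. Opening a cell means evaluating each of its children cells once. \texttt{SequOOL} with budget $n$: set $h_{\max}=\lfloor n/\bar\log n\rfloor$ and open $\mathcal P_{0,1}$. Then, for $h=1,2,\dots,h_{\max}$ in increasing order, open the $\lfloor h_{\max}/h\rfloor$ depth-$h$ cells having the largest values $f_{h,j}$ among the evaluated depth-$h$ cells (or all of them if there are fewer). Finally, output $x(n)$, a representative point $x_{h,i}$ of an evaluated cell maximizing $f_{h,i}$. *)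

(* Defs.v *)
From Stdlib Require Import Reals Lra Lia Classical ClassicalEpsilon ClassicalDescription.
Open Scope R_scope.

(* Harmonic number  \bar\log n = sum_{t=1}^n 1/t *)
Fixpoint harmonic (n : nat) : R :=
  match n with
  | O => 0
  | S k => harmonic k + / INR (S k)
  end.

Definition nat_floor (x : R) : nat := Z.to_nat (Int_part x).

Fixpoint count_upto (P : nat -> Prop) (m : nat) : nat :=
  match m with
  | O => O
  | S k => (count_upto P k + if excluded_middle_informative (P k) then 1 else 0)%nat
  end.

(* Depth-h cells are indexed by i < I h
   (0-based; the root is cell (0,0)).  parent h j is the index of the
   depth-h cell containing the depth-(h+1) cell j; the children of (h,i)
   are the depth-(h+1) cells j with parent h j = i. *)
Record hpart (X : Type) := {
  I : nat -> nat;
  cell : nat -> nat -> X -> Prop;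
  parent : nat -> nat -> nat;
  rep : nat -> nat -> X;
  I0 : I 0%nat = 1%nat;
  part : forall h x, exists! i, (i < I h)%nat /\ cell h i x;
  parent_lt : forall h j, (j < I (S h))%nat -> (parent h j < I h)%nat;
  child_sub : forall h j x, (j < I (S h))%nat -> cell (S h) j x -> cell h (parent h j) x;
  rep_in : forall h i, (i < I h)%nat -> cell h i (rep h i)
}.
Arguments I {X}. Arguments cell {X}. Arguments parent {X}. Arguments rep {X}.

Definition global_opt {X} (f : X -> R) (xs : X) : Prop := forall x, f x <= f xs.

Definition local_smooth {X} (P : hpart X) (f : X -> R) (xs : X) (nu rho : R) : Prop :=
  forall h i x, (i < I P h)%nat -> cell P h i xs -> cell P h i x ->
    f x >= f xs - nu * rho ^ h.

Definition cell_sup_ge {X} (P : hpart X) (f : X -> R) (h i : nat) (c : R) : Prop :=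
  exists s, is_lub (fun y => exists x, cell P h i x /\ y = f x) s /\ s >= c.

Definition Ncount {X} (P : hpart X) (f : X -> R) (xs : X) (h : nat) (eps : R) : nat :=
  count_upto (fun i => cell_sup_ge P f h i (f xs - eps)) (I P h).

Definition is_inf (S : R -> Prop) (m : R) : Prop :=
  (forall y, S y -> m <= y) /\ (forall b, (forall y, S y -> b <= y) -> b <= m).

(* d = d(nu, C, rho) (in particular the defining set is nonempty, i.e. d is finite) *)
Definition near_opt_dim {X} (P : hpart X) (f : X -> R) (xs : X) (nu C rho d : R) : Prop :=
  is_inf (fun d' => 0 <= d' /\ forall h : nat,
            INR (Ncount P f xs h (3 * nu * rho ^ h)) <= C * Rpower rho (- d' * INR h)) d.

Definition hmax (n : nat) : nat := nat_floor (INR n / harmonic n).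

Definition evaluated {X} (P : hpart X) (O : nat -> nat -> Prop) (h j : nat) : Prop :=
  (1 <= h)%nat /\ (j < I P h)%nat /\ O (pred h) (parent P (pred h) j).

(* A run of SequOOL with budget n, with opened sets O h (of indices of
   depth-h cells), output xout.  Ties are broken arbitrarily. *)
Definition sequool_run {X} (P : hpart X) (f : X -> R) (n : nat)
    (O : nat -> nat -> Prop) (xout : X) : Prop :=
  (forall i, O 0%nat i <-> i = 0%nat) /\
  (forall h, (1 <= h <= hmax n)%nat ->
     (forall i, O h i -> evaluated P O h i) /\
     count_upto (O h) (I P h) =
       Nat.min (hmax n / h) (count_upto (evaluated P O h) (I P h)) /\
     (forall i j, O h i -> evaluated P O h j -> ~ O h j ->
        f (rep P h j) <= f (rep P h i))) /\
  (exists h i, (h <= S (hmax n))%nat /\ evaluated P O h i /\ xout = rep P h i /\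
     forall h' j, (h' <= S (hmax n))%nat -> evaluated P O h' j ->
       f (rep P h' j) <= f (rep P h i)).

(* Main.v *)
Require Import Defs.
From Stdlib Require Import Reals Lra Lia Classical ClassicalEpsilon ClassicalDescription.
Open Scope R_scope.

Lemma exp_le_m (x y : R) : x <= y -> exp x <= exp y.
Proof. intros [H|H]. left; apply exp_increasing; auto. subst; lra. Qed.

Lemma count_mono (P Q : nat -> Prop) m :
  (forall k, (k < m)%nat -> P k -> Q k) -> (count_upto P m <= count_upto Q m)%nat.
Proof.
  induction m; simpl; intros H; [lia|].
  assert (IH := IHm (fun k Hk => H k ltac:(lia))).
  destruct (excluded_middle_informative (P m)); destruct (excluded_middle_informative (Q m)); try lia.
  exfalso; apply n; apply H; auto.
Qed.

Lemma count_strict (P Q : nat -> Prop) m k0 :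
  (forall k, (k < m)%nat -> P k -> Q k) -> (k0 < m)%nat -> Q k0 -> ~ P k0 ->
  (S (count_upto P m) <= count_upto Q m)%nat.
Proof.
  induction m; simpl; intros H Hk HQ HP; [lia|].
  destruct (Nat.eq_dec k0 m) as [->|Hne].
  - assert (Hm := count_mono P Q m (fun k Hk => H k ltac:(lia))).
    destruct (excluded_middle_informative (P m)); destruct (excluded_middle_informative (Q m)); try tauto; lia.
  - assert (IH := IHm (fun k Hk => H k ltac:(lia)) ltac:(lia) HQ HP).
    destruct (excluded_middle_informative (P m)); destruct (excluded_middle_informative (Q m)); try lia.
    exfalso; apply n; apply H; auto.
Qed.

Lemma search (Q : nat -> Prop) : Q 0%nat -> forall m,
  (forall h', (h' <= m)%nat -> Q h') \/ exists h, (forall h', (h' <= h)%nat -> Q h') /\ ~ Q (S h).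
Proof.
  intros Q0 m; induction m.
  - left; intros h' H; replace h' with 0%nat by lia; auto.
  - destruct IHm as [IH|IH]; [|right; auto].
    destruct (classic (Q (S m))) as [Hq|Hq].
    + left; intros h' H. destruct (Nat.eq_dec h' (S m)); [subst; auto|apply IH; lia].
    + right; exists m; auto.
Qed.

Lemma sup_ge {X} (P : hpart X) (f : X -> R) xs h i x0 c :
  global_opt f xs -> cell P h i x0 -> c <= f x0 -> cell_sup_ge P f h i c.
Proof.
  intros Hg Hc Hle.
  destruct (completeness (fun y => exists x, cell P h i x /\ y = f x)) as [s Hs].
  - exists (f xs); intros y [x [_ ->]]; apply Hg.
  - exists (f x0); eauto.
  - exists s; split; auto. destruct Hs as [Hub _].
    assert (f x0 <= s) by (apply Hub; eauto). lra.
Qed.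

Lemma inf_ne (S : R -> Prop) d : is_inf S d -> exists d', S d'.
Proof.
  intros [H1 H2]. apply NNPP; intro Hn.
  assert (d + 1 <= d); [|lra]. apply H2. intros y Hy; exfalso; apply Hn; eauto.
Qed.

Lemma nbound {X} (P : hpart X) f xs nu C rho d :
  0 < rho < 1 -> 1 < C -> near_opt_dim P f xs nu C rho d ->
  forall h, INR (Ncount P f xs h (3 * nu * rho ^ h)) <= C * Rpower rho (- d * INR h).
Proof.
  intros Hr HC Hdim h.
  pose proof (inf_ne _ _ Hdim) as [d' [Hd0 Hd']].
  destruct Hdim as [Hlb Hglb].
  set (N := INR (Ncount P f xs h (3 * nu * rho ^ h))) in *.
  apply Rnot_lt_le; intro Hlt.
  destruct h as [|h].
  - specialize (Hd' 0%nat). simpl in Hd', Hlt. fold N in Hd'.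
    rewrite Rmult_0_r, Rpower_O in Hd', Hlt by lra. unfold N in Hlt; simpl in Hlt; lra.
  - set (hr := INR (S h)) in *.
    assert (Hhr : 0 < hr) by (apply lt_0_INR; lia).
    set (a := ln rho).
    assert (Ha : a < 0) by (unfold a; rewrite <- ln_1; apply ln_increasing; lra).
    set (E := Rpower rho (- d * hr)).
    assert (HE : 0 < E) by (unfold E, Rpower; apply exp_pos).
    set (r := N / (C * E)).
    assert (Hr1 : 1 < r).
    { unfold r. assert (0 < C*E) by nra. apply (Rmult_lt_reg_r (C*E)); [nra|]. unfold Rdiv; rewrite Rmult_assoc, Rinv_l by lra. fold E in Hlt. nra. }
    assert (Hlr : 0 < ln r) by (rewrite <- ln_1; apply ln_increasing; lra).
    set (dl := ln r / (2 * hr * (- a))).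
    assert (Hdl : 0 < dl) by (unfold dl; apply Rdiv_lt_0_compat; nra).
    assert (Key : C * Rpower rho (- (d + dl) * hr) < N).
    { assert (Rpower rho (- (d + dl) * hr) = E * exp (ln r / 2)).
      { unfold E, Rpower. fold a. rewrite <- exp_plus. f_equal. unfold dl. field. nra. }
      rewrite H.
      assert (exp (ln r / 2) < r).
      { rewrite <- (exp_ln r) at 2 by lra. apply exp_increasing; lra. }
      assert (N = C * E * r) by (unfold r; field; nra).
      rewrite H1. assert (0 < C * E) by nra. nra. }
    assert (d + dl <= d); [|lra].
    apply Hglb. intros y [Hy0 Hy]. specialize (Hy (S h)). fold N hr in Hy.
    apply Rnot_lt_le; intro Hyl.
    assert (Rpower rho (- y * hr) <= Rpower rho (- (d + dl) * hr)).
    { unfold Rpower; apply exp_le_m. fold a. assert (0 < hr * (-a)) by nra. nra. }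
    nra.
Qed.
Lemma final_an (rho d C : R) (hm hb : nat) :
  0 < rho < 1 -> 0 < d -> 1 < C ->
  INR (S hb) * C * Rpower rho (- d * INR (S hb)) > INR hm ->
  INR hm * (d * ln (1 / rho)) / C > exp 1 ->
  rho ^ (S hb) <= Rpower ((INR hm * (d * ln (1 / rho)) / C) / ln (INR hm * (d * ln (1 / rho)) / C)) (- (1 / d)).
Proof.
  intros Hr Hd HC Hg Hn.
  set (nt := INR hm * (d * ln (1 / rho)) / C) in *.
  set (k := INR (S hb)) in *.
  assert (Hk : 0 < k) by (apply lt_0_INR; lia).
  assert (Hlr : ln (1/rho) = - ln rho) by (unfold Rdiv; rewrite Rmult_1_l, ln_Rinv; lra).
  assert (Ha : ln rho < 0) by (rewrite <- ln_1; apply ln_increasing; lra).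
  set (L := d * ln (1 / rho)) in *.
  assert (HL : 0 < L) by (unfold L; rewrite Hlr; nra).
  set (x := Rpower rho (- d * k)) in *.
  assert (Hlx : ln x = k * L) by (unfold x, Rpower; rewrite ln_exp; unfold L; rewrite Hlr; ring).
  assert (Hx1 : 1 < x).
  { unfold x, Rpower. rewrite <- exp_0. apply exp_increasing. assert (0 < k * d) by nra. nra. }
  assert (Hnt : nt < x * ln x).
  { rewrite Hlx. unfold nt. apply (Rmult_lt_reg_r C); [lra|].
    unfold Rdiv. rewrite Rmult_assoc, Rinv_l, Rmult_1_r by lra. nra. }
  assert (He1 : 0 < exp 1) by apply exp_pos.
  assert (Hln1 : 1 < ln nt) by (rewrite <- (ln_exp 1); apply ln_increasing; lra).
  set (y := nt / ln nt).
  assert (Hy0 : 0 < y) by (unfold y; apply Rdiv_lt_0_compat; lra).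
  assert (Hlny : ln y < ln nt).
  { unfold y, Rdiv. rewrite ln_mult, ln_Rinv by (try apply Rinv_0_lt_compat; lra).
    assert (0 < ln (ln nt)) by (rewrite <- ln_1; apply ln_increasing; lra). lra. }
  assert (Hyl : y * ln y < nt).
  { assert (y * ln nt = nt) by (unfold y; field; lra). nra. }
  assert (Hyx : y <= x).
  { apply Rnot_lt_le; intro Hxy.
    assert (ln x < ln y) by (apply ln_increasing; lra).
    assert (0 < ln x) by (rewrite <- ln_1; apply ln_increasing; lra).
    nra. }
  assert (Hlyx : ln y <= ln x).
  { destruct Hyx as [H|H]; [left; apply ln_increasing; lra| rewrite H; lra]. }
  rewrite <- Rpower_pow by lra. fold k.
  unfold Rpower at 1 2. apply exp_le_m.
  assert (k * ln rho = - (1/d) * ln x).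
  { rewrite Hlx. unfold L. rewrite Hlr. field. lra. }
  rewrite H. assert (0 < 1/d) by (apply Rdiv_lt_0_compat; lra). nra.
Qed.

Theorem corollary3 (X : Type) (P : hpart X) (f : X -> R) (xs : X)
  (nu rho C d : R) (n : nat) (O : nat -> nat -> Prop) (xout : X) :
  global_opt f xs ->
  0 < nu -> 0 < rho < 1 -> local_smooth P f xs nu rho ->
  1 < C ->
  near_opt_dim P f xs nu C rho d -> 0 < d ->
  let nt := INR (hmax n) * (d * ln (1 / rho)) / C in
  nt > exp 1 ->
  sequool_run P f n O xout ->
  f xs - f xout <= nu * Rpower (nt / ln nt) (- (1 / d)).
Proof.
  intros Hg Hnu Hr Hls HC Hdim Hd nt Hnt Hrun.
  destruct Hrun as [H0 [Hstep Hout]].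
  set (hm := hmax n) in *.
  set (g := fun k : nat => INR k * C * Rpower rho (- d * INR k)).
  assert (Ha : ln rho < 0) by (rewrite <- ln_1; apply ln_increasing; lra).
  assert (Hgk : forall k, INR k <= g k).
  { intro k. unfold g. assert (1 <= Rpower rho (- d * INR k)).
    { unfold Rpower. rewrite <- exp_0. apply exp_le_m. pose proof (pos_INR k).
      assert (0 <= d * INR k) by nra. nra. }
    pose proof (pos_INR k). assert (1 <= C * Rpower rho (- d * INR k)) by nra. nra. }
  destruct (search (fun k => g k <= INR hm) ltac:(unfold g; simpl; pose proof (pos_INR hm); lra) (S hm))
    as [Hall|[hb [Hq Hnq]]].
  { exfalso. specialize (Hall (S hm) (le_n _)). simpl in Hall.
    pose proof (Hgk (S hm)). rewrite S_INR in H. lra. }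
  assert (Hhb : (hb <= hm)%nat).
  { apply INR_le. pose proof (Hgk hb). pose proof (Hq hb (le_n _)). simpl in H0. lra. }
  assert (Claim : forall h, (h <= hb)%nat -> forall i, (i < I P h)%nat -> cell P h i xs -> O h i).
  { induction h.
    - intros _ i Hi _. rewrite I0 in Hi. apply H0. lia.
    - intros Hh i Hi Hc.
      pose proof (parent_lt _ P h i Hi) as Hp.
      pose proof (child_sub _ P h i xs Hi Hc) as Hpc.
      pose proof (IHh ltac:(lia) _ Hp Hpc) as Hop.
      assert (Hev : evaluated P O (S h) i) by (split; [lia|split; auto]).
      destruct (Hstep (S h) ltac:(lia)) as [Hsub [Hcnt Hord]].
      apply NNPP; intro Hno.
      pose proof (count_strict (O (S h)) (evaluated P O (S h)) (I P (S h)) i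
                    (fun k _ Hk => Hsub k Hk) Hi Hev Hno) as Hs1.
      assert (Hpos : 0 < nu * rho ^ S h) by (apply Rmult_lt_0_compat; [lra| apply pow_lt; lra]).
      assert (Hs2 : (S (count_upto (O (S h)) (I P (S h))) <= Ncount P f xs (S h) (3 * nu * rho ^ S h))%nat).
      { unfold Ncount. apply (count_strict _ _ _ i).
        - intros k Hk Ok. apply (sup_ge P f xs _ _ (rep P (S h) k)); auto.
          + apply rep_in; auto.
          + pose proof (Hord k i Ok Hev Hno).
            pose proof (Hls (S h) i (rep P (S h) i) Hi Hc (rep_in _ P _ _ Hi)). lra.
        - auto.
        - apply (sup_ge P f xs _ _ xs); auto. lra.
        - auto. }
      assert (HN : (Ncount P f xs (S h) (3 * nu * rho ^ S h) <= hm / S h)%nat).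
      { apply Nat.div_le_lower_bound; [lia|].
        pose proof (nbound P f xs nu C rho d Hr HC Hdim (S h)) as Hb.
        pose proof (Hq (S h) Hh) as Hqq. unfold g in Hqq; cbv beta in Hqq.
        apply INR_le. rewrite mult_INR.
        assert (0 < INR (S h)) by (apply lt_0_INR; lia). nra. }
      lia. }
  destruct (part _ P (S hb) xs) as [i [[Hi Hc] _]].
  pose proof (Claim hb (le_n _) _ (parent_lt _ P hb i Hi) (child_sub _ P hb i xs Hi Hc)) as Hop.
  assert (Hev : evaluated P O (S hb) i) by (split; [lia|split; auto]).
  destruct Hout as [h0 [i0 [_ [_ [Hx Hmax]]]]].
  pose proof (Hmax (S hb) i ltac:(lia) Hev) as Hm.
  rewrite <- Hx in Hm.
  pose proof (Hls (S hb) i (rep P (S hb) i) Hi Hc (rep_in _ P _ _ Hi)) as Hl.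
  assert (Hfa := final_an rho d C hm hb Hr Hd HC ltac:(unfold g in Hnq; cbv beta in Hnq; lra) Hnt).
  unfold nt. fold hm.
  assert (nu * rho ^ S hb <= nu * Rpower (INR hm * (d * ln (1 / rho)) / C / ln (INR hm * (d * ln (1 / rho)) / C)) (- (1 / d))).
  { apply Rmult_le_compat_l; lra. }
  lra.
Qed.
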